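(* For all integers $k\ge 3$ and $n\ge 1$, the cycle chain $\mathcal{C}_k^n$ is odd prime.
   Context: All graphs are finite and simple. A graph $G$ of order $N$ is odd prime if there is a bijection $\ell:V(G)\to\{1,3,\ldots,2N-1\}$ with $\gcd(\ell(u),\ell(v))=1$ for every edge $uv$. The cycle chain $\mathcal{C}_k^n$ has vertices $v_1,\ldots,v_{n+1}$ and, for each $i=1,\ldots,n$, two internally disjoint paths joining $v_i$ to $v_{i+1}$ (with all internal vertices new and distinct): if $k$ is even, the paths $v_i,w_{i,1},\ldots,w_{i,k/2-1},v_{i+1}$ and $v_i,x_{i,1},\ldots,x_{i,k/2-1},v_{i+1}$; if $k$ is odd, the paths $v_i,w_{i,1},\ldots,w_{i,(k-1)/2-1},v_{i+1}$ and $v_i,x_{i,1},\ldots,x_{i,(k-1)/2},v_{i+1}$. Thus it is a chain of $n$ cycles of length $k$, consecutive cycles sharing the single vertex $v_{i+1}$. *)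

(* Defs.v *)
From mathcomp Require Import all_boot.
Set Implicit Arguments. Unset Strict Implicit. Unset Printing Implicit Defensive.

Definition odd_prime (V : finType) (e : rel V) : Prop :=
  exists l : V -> nat,
    [/\ injective l,
        (forall v, odd (l v) && (l v < 2 * #|V|)),
        (forall m, odd m -> m < 2 * #|V| -> exists v, l v = m)
      & (forall u v, e u v -> coprime (l u) (l v))].

Definition consec (T : eqType) (s : seq T) (u v : T) : bool :=
  ((u, v) \in zip s (behead s)) || ((v, u) \in zip s (behead s)).

(* Number of internal vertices on the w-path and on the x-path. *)
Definition na (k : nat) : nat := (k - 2)./2.
Definition nb (k : nat) : nat := (k - 2) - na k.

(* Vertices: v_0..v_n, w_{i,j} (i<n, j<na k), x_{i,j} (i<n, j<nb k). *)
Definition cc_vert (k n : nat) : finType :=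
  ('I_n.+1 + ('I_n * 'I_(na k)) + ('I_n * 'I_(nb k)))%type.

Definition cvV (k n : nat) (i : 'I_n.+1) : cc_vert k n := inl (inl i).
Definition cvW (k n : nat) (i : 'I_n) (j : 'I_(na k)) : cc_vert k n :=
  inl (inr (i, j)).
Definition cvX (k n : nat) (i : 'I_n) (j : 'I_(nb k)) : cc_vert k n :=
  inr (i, j).

Definition wpath (k n : nat) (i : 'I_n) : seq (cc_vert k n) :=
  cvV k (widen_ord (leqnSn n) i)
    :: rcons [seq cvW i j | j <- enum 'I_(na k)] (cvV k (lift ord0 i)).
Definition xpath (k n : nat) (i : 'I_n) : seq (cc_vert k n) :=
  cvV k (widen_ord (leqnSn n) i)
    :: rcons [seq cvX i j | j <- enum 'I_(nb k)] (cvV k (lift ord0 i)).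

Definition cc_edge (k n : nat) : rel (cc_vert k n) :=
  fun u v => [exists i : 'I_n, consec (wpath k i) u v || consec (xpath k i) u v].

(* Main.v *)
Require Import Defs.
From mathcomp Require Import all_boot.
From mathcomp Require Import zify.

Definition pos (k n : nat) (v : cc_vert k n) : nat :=
  match v with
  | inl (inl i) => i * (k - 1)
  | inl (inr (i, j)) => i * (k - 1) + 2 * j.+1
  | inr (i, j) => i * (k - 1) + (2 * j).+1
  end.

Definition step (x y : nat) : bool := (y == x + 1) || (y == x + 2).

Lemma nanb k : 3 <= k ->
  [/\ 2 * na k <= k - 2, 2 * nb k <= k - 1, na k + nb k = k - 2,
   (k - 1 - 2 * na k == 1) || (k - 1 - 2 * na k == 2) &
   (k - 2 * nb k == 1) || (k - 2 * nb k == 2)].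
Proof.
move=> hk; rewrite /nb /na.
have := odd_double_half (k - 2); rewrite -muln2.
move: (odd (k-2)) ((k-2)./2) => [] m /= h; split; lia.
Qed.

Lemma divmod_eq q1 q2 r1 r2 d : r1 < d -> r2 < d ->
  q1 * d + r1 = q2 * d + r2 -> q1 = q2 /\ r1 = r2.
Proof.
move=> h1 h2 e.
have d0 : 0 < d by lia.
have := congr1 (divn^~ d) e; rewrite !divnMDl // !divn_small // !addn0 => eq.
subst; split => //; lia.
Qed.
Arguments divmod_eq {q1 q2 r1 r2 d}.

Lemma path_zip (T : eqType) (e : rel T) x s u v :
  path e x s -> (u, v) \in zip (x :: s) s -> e u v.
Proof.
elim: s x => [|y s IH] x //= /andP[exy ps].
rewrite in_cons => /orP[/eqP[-> ->] // | ].
exact: IH.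
Qed.
Arguments path_zip {T e x s u v}.

Lemma path_evens c a : path step c [seq c + 2 * j | j <- iota 1 a].
Proof.
elim: a c => [|a IH] c //=.
apply/andP; split; first by rewrite /step; apply/orP; right; rewrite muln1.
have -> : [seq c + 2 * j | j <- iota 2 a] = [seq (c + 2 * 1) + 2 * j | j <- iota 1 a].
  rewrite -(addn1 1) iotaDl -map_comp; apply: eq_map => j /=; lia.
exact: IH.
Qed.

Lemma last_evens c a : last c [seq c + 2 * j | j <- iota 1 a] = c + 2 * a.
Proof.
elim: a c => [|a IH] c /=; first by rewrite muln0 addn0.
have -> : [seq c + 2 * j | j <- iota 2 a] = [seq (c + 2 * 1) + 2 * j | j <- iota 1 a].
  rewrite -(addn1 1) iotaDl -map_comp; apply: eq_map => j /=; lia.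
case: a IH => [|a] IH /=; first by rewrite muln1.
have := IH (c + 2 * 1); rewrite /= => ->; lia.
Qed.

Lemma path_odds c b : path step c [seq c + (2 * j).+1 | j <- iota 0 b].
Proof.
case: b => [|b] //=; apply/andP; split; first by rewrite /step addn1 eqxx.
have -> : [seq c + (2 * j).+1 | j <- iota 1 b] = [seq (c + 1) + 2 * j | j <- iota 1 b].
  apply: eq_map => j /=; lia.
have -> : c + (2 * 0).+1 = c + 1 by lia.
exact: path_evens.
Qed.

Lemma last_odds c b : 0 < b -> last c [seq c + (2 * j).+1 | j <- iota 0 b] = c + (2 * b).-1.
Proof.
case: b => [|b] //= _.
have -> : [seq c + (2 * j).+1 | j <- iota 1 b] = [seq (c + 1) + 2 * j | j <- iota 1 b].
  apply: eq_map => j /=; lia.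
have -> : c + (2 * 0).+1 = c + 1 by lia.
rewrite last_evens; lia.
Qed.

Lemma coprime_step x y : step x y -> coprime (2 * x + 1) (2 * y + 1).
Proof.
move=> /orP[] /eqP ->.
- have -> : 2 * (x + 1) + 1 = (2 * x + 1) + 2 by lia.
  by rewrite /coprime gcdnDl -/(coprime _ _) coprimen2 addn1 /= oddM.
- have -> : 2 * (x + 2) + 1 = (2 * x + 1) + 2 ^ 2 by lia.
  by rewrite /coprime gcdnDl -/(coprime _ _) coprime_pexpr // coprimen2 addn1 /= oddM.
Qed.

Lemma wpath_step k n (i : 'I_n) : 3 <= k -> path (relpre (@pos k n) step)
  (cvV k (widen_ord (leqnSn n) i)) (rcons [seq cvW i j | j <- enum 'I_(na k)] (cvV k (lift ord0 i))).
Proof.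
move=> hk; rewrite -path_map map_rcons -map_comp /=.
set c := i * (k - 1).
have -> : [seq (pos k n \o cvW (k:=k) i) j | j <- enum 'I_(na k)] = [seq c + 2 * j | j <- iota 1 (na k)].
  rewrite -(addn0 1) iotaDl -val_enum_ord -!map_comp; apply: eq_map => j /=; lia.
rewrite rcons_path path_evens last_evens /=.
case: (nanb k hk) => _ _ _ h _; rewrite /step /c; rewrite /bump /= add1n mulSn -/c; clearbody c; lia.
Qed.

Lemma xpath_step k n (i : 'I_n) : 3 <= k -> path (relpre (@pos k n) step)
  (cvV k (widen_ord (leqnSn n) i)) (rcons [seq cvX i j | j <- enum 'I_(nb k)] (cvV k (lift ord0 i))).
Proof.
move=> hk; rewrite -path_map map_rcons -map_comp /=.
set c := i * (k - 1).
have -> : [seq (pos k n \o cvX (k:=k) i) j | j <- enum 'I_(nb k)] = [seq c + (2 * j).+1 | j <- iota 0 (nb k)].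
  rewrite -val_enum_ord -!map_comp; apply: eq_map => j /=; lia.
case: (nanb k hk) => _ _ hs _ h.
rewrite rcons_path path_odds last_odds /=; last by move: h; rewrite /nb; lia.
rewrite /step /bump /= add1n mulSn -/c; clearbody c; move: hs h; rewrite /nb; lia.
Qed.

Lemma edge_step k n (u v : cc_vert k n) : 3 <= k -> cc_edge u v ->
  step (pos k n u) (pos k n v) || step (pos k n v) (pos k n u).
Proof.
move=> hk /existsP[i] /orP[] /orP[] /= H.
- by apply/orP; left; exact: (path_zip (wpath_step k n i hk) H).
- by apply/orP; right; exact: (path_zip (wpath_step k n i hk) H).
- by apply/orP; left; exact: (path_zip (xpath_step k n i hk) H).
- by apply/orP; right; exact: (path_zip (xpath_step k n i hk) H).
Qed.

Lemma card_cc k n : 3 <= k -> #|cc_vert k n| = n * (k - 1) + 1.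
Proof.
move=> hk; rewrite /cc_vert !card_sum !card_prod !card_ord.
case: (nanb k hk) => _ _ h _ _.
rewrite -addnA -mulnDr h.
have -> : k - 1 = (k - 2).+1 by lia.
rewrite mulnS; lia.
Qed.


Lemma pos_bound k n (v : cc_vert k n) : 3 <= k -> pos k n v <= n * (k - 1).
Proof.
move=> hk; case: (nanb k hk) => h1 h2 _ _ _.
case: v => [[i|[i j]]|[i j]] /=.
- by rewrite leq_mul2r -ltnS ltn_ord orbT.
- have : i.+1 * (k - 1) <= n * (k - 1) by rewrite leq_mul2r ltn_ord orbT.
  rewrite mulSn; have := ltn_ord j; lia.
- have : i.+1 * (k - 1) <= n * (k - 1) by rewrite leq_mul2r ltn_ord orbT.
  rewrite mulSn; have := ltn_ord j; lia.
Qed.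

Lemma pos_dm k n (v : cc_vert k n) : 3 <= k ->
  exists q r, pos k n v = q * (k - 1) + r /\ r < k - 1.
Proof.
move=> hk; case: (nanb k hk) => h1 h2 _ _ _.
case: v => [[i|[i j]]|[i j]] /=; exists i.
- exists 0; split; [lia|lia].
- exists (2 * j.+1); split => //; have := ltn_ord j; lia.
- exists (2 * j).+1; split => //; have := ltn_ord j; lia.
Qed.

Definition blk k n (v : cc_vert k n) : nat :=
  match v with inl (inl i) => i | inl (inr (i, _)) => i | inr (i, _) => i end.
Definition off k n (v : cc_vert k n) : nat :=
  match v with inl (inl i) => 0 | inl (inr (_, j)) => 2 * j.+1 | inr (_, j) => (2 * j).+1 end.

Arguments blk {k n}.
Arguments off {k n}.


Lemma pos_bo k n (v : cc_vert k n) : pos k n v = blk v * (k - 1) + off v.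
Proof. by case: v => [[i|[i j]]|[i j]] /=; rewrite ?addn0. Qed.

Lemma off_lt k n (v : cc_vert k n) : 3 <= k -> off v < k - 1.
Proof.
move=> hk; case: (nanb k hk) => h1 h2 _ _ _.
case: v => [[i|[i j]]|[i j]] /=; try lia; have := ltn_ord j; lia.
Qed.

Lemma pos_inj k n : 3 <= k -> injective (pos k n).
Proof.
move=> hk u v; rewrite !pos_bo => e.
have [eb eo] := divmod_eq (off_lt _ _ u hk) (off_lt _ _ v hk) e.
clear e; move: eb eo.
case: u => [[i|[i j]]|[i j]]; case: v => [[i'|[i' j']]|[i' j']] /= eb eo; try lia.
- by rewrite (ord_inj eb).
- have ej : j = j' :> nat by lia.
  by rewrite (ord_inj eb) (ord_inj ej).
- have ej : j = j' :> nat by lia.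
  by rewrite (ord_inj eb) (ord_inj ej).
Qed.

Lemma pos_surj k n p : 3 <= k -> p <= n * (k - 1) -> exists v : cc_vert k n, pos k n v = p.
Proof.
move=> hk hp; case: (nanb k hk) => h1 h2 h3 _ _.
have k0 : 0 < k - 1 by lia.
have hr : p %% (k - 1) < k - 1 by rewrite ltn_mod.
have ep := divn_eq p (k - 1).
move: hr ep; set q := p %/ (k - 1); set r := p %% (k - 1); clearbody q r => hr ep.
case: (posnP r) => [r0|rpos].
  have hq : q < n.+1.
    rewrite ltnS -(leq_pmul2r k0); lia.
  exists (cvV k (Ordinal hq)); rewrite /= ep r0 addn0 //.
have hq : q < n.
  rewrite -(ltn_pmul2r k0); lia.
have := odd_double_half r; rewrite -muln2.
case: (odd r) => /=.
- move=> er.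
  have hj : r./2 < nb k by lia.
  exists (cvX (Ordinal hq) (Ordinal hj)); rewrite /= ep; lia.
- move=> er.
  have hj : r./2.-1 < na k by lia.
  exists (cvW (Ordinal hq) (Ordinal hj)); rewrite /= ep; lia.
Qed.

Theorem theorem3p3 (k n : nat) (hk : 3 <= k) (hn : 1 <= n) :
  odd_prime (@cc_edge k n).
Proof.
exists (fun v => 2 * pos k n v + 1); split.
- move=> u v e; apply: (pos_inj _ _ hk); lia.
- move=> v; rewrite card_cc // addn1 /= oddM /=.
  have := pos_bound _ _ v hk; lia.
- move=> m om; rewrite card_cc // => hm.
  have [v hv] := pos_surj k n (m./2) hk (ltac:(move: om hm; have := odd_double_half m; rewrite -muln2; lia)).
  exists v; rewrite hv; have := odd_double_half m; rewrite om -muln2; lia.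
- move=> u v /(edge_step _ _ _ _ hk) /orP[] h; first exact: coprime_step.
  by rewrite coprime_sym; exact: coprime_step.
Qed.
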